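(* Let $\mu\in P$. (i) If $\omega\in P^+$ is minuscule, then $\mu_++w_\mu\omega\in P^+$. (iia) If $\mu_++w_\mu\alpha_0\notin P^+$, then $w_\mu\alpha_0=-\alpha_j$ for some $1\le j\le n$, and moreover $\langle\mu_+,\alpha_j^\vee\rangle=1$. (iib) If $\mu_++w_\mu\alpha_0\in P^+$ and $w_\mu\alpha_0\in R^-$, then $\langle\mu_+,(w_\mu\alpha_0)^\vee\rangle\le-2$.
   Context: Let $R$ be an irreducible reduced crystallographic root system of rank $n$ spanning a real Euclidean space $V$ with inner product $\langle\cdot,\cdot\rangle$; $\alpha^\vee:=2\alpha/\langle\alpha,\alpha\rangle$; $P$ the weight lattice; $R^+$ positive roots with simple roots $\alpha_1,\dots,\alpha_n$, $R^-:=-R^+$; $P^+$ the dominant weights; $\alpha_0\in R^+$ the root such that $\alpha_0^\vee$ is the highest root of $R^\vee$. A weight $\omega\in P^+$ is minuscule if $\omega\ne0$ and $\langle\omega,\alpha^\vee\rangle\in\{0,1\}$ for all $\alpha\in R^+$. $W_0$ is the finite Weyl group; for $\mu\in P$, $w_\mu$ is the shortest element of $W_0$ with $w_\mu\mu\in P^+$ and $\mu_+:=w_\mu\mu$. *)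

(* Defs.v *)
From HB Require Import structures.
From mathcomp Require Import all_boot all_order all_algebra.
Set Implicit Arguments. Unset Strict Implicit. Unset Printing Implicit Defensive.
Import Order.TTheory GRing.Theory Num.Theory.
Local Open Scope ring_scope.

Section RootSystems.
Variables (R : realFieldType) (n : nat).
Notation V := 'rV[R]_n.

Definition dot (u v : V) : R := \sum_(i < n) u ord0 i * v ord0 i.

Definition coroot (a : V) : V := (2 / dot a a) *: a.

Definition pairing (x a : V) : R := dot x (coroot a).

Definition refl (a x : V) : V := x - pairing x a *: a.

Definition is_int (x : R) : Prop := exists z : int, x = z%:~R.

Definition irred_reduced_root_system (Rs : seq V) : Prop :=
  (0 : V) \notin Rs /\
      (forall v : V, exists c : 'I_(size Rs) -> R,
          v = \sum_(i < size Rs) c i *: Rs`_i) /\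
      (forall a b, a \in Rs -> b \in Rs -> refl a b \in Rs) /\
      (forall a b, a \in Rs -> b \in Rs -> is_int (pairing b a)) /\
      (forall a b (c : R), a \in Rs -> b \in Rs -> b = c *: a -> c = 1 \/ c = -1) /\
    (forall S : pred V,
         (forall a b, a \in Rs -> b \in Rs -> S a -> ~~ S b -> dot a b = 0) ->
         (forall a, a \in Rs -> S a) \/ (forall a, a \in Rs -> ~~ S a)).

Definition is_base (Rs : seq V) (D : 'I_n -> V) : Prop :=
  (forall i, D i \in Rs) /\
  (forall b, b \in Rs -> exists k : 'I_n -> int,
      b = \sum_(i < n) (k i)%:~R *: D i /\
      ((forall i, 0 <= k i) \/ (forall i, k i <= 0))).

Definition pos_root (Rs : seq V) (D : 'I_n -> V) (b : V) : Prop :=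
  b \in Rs /\ exists k : 'I_n -> int,
      b = \sum_(i < n) (k i)%:~R *: D i /\ (forall i, 0 <= k i).

Definition neg_root (Rs : seq V) (D : 'I_n -> V) (b : V) : Prop :=
  pos_root Rs D (- b).

Definition weight (Rs : seq V) (x : V) : Prop :=
  forall a, a \in Rs -> is_int (pairing x a).

Definition dominant (Rs : seq V) (D : 'I_n -> V) (x : V) : Prop :=
  weight Rs x /\ forall i, 0 <= pairing x (D i).

Definition minuscule (Rs : seq V) (D : 'I_n -> V) (w : V) : Prop :=
  dominant Rs D w /\ w <> 0 /\
  forall a, pos_root Rs D a -> pairing w a = 0 \/ pairing w a = 1.

(* alpha0 is a positive root such that alpha0^vee is the highest root of
   R^vee (w.r.t. the base of simple coroots alpha_i^vee) *)
Definition is_alpha0 (Rs : seq V) (D : 'I_n -> V) (a0 : V) : Prop :=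
  pos_root Rs D a0 /\
  forall b, b \in Rs -> exists k : 'I_n -> int,
      coroot a0 - coroot b = \sum_(i < n) (k i)%:~R *: coroot (D i) /\
      (forall i, 0 <= k i).

(* Elements of W_0 given by words in the simple reflections:
   the word [:: i1; ...; ik] acts as s_{i1} ... s_{ik}. *)
Definition weyl_act (D : 'I_n -> V) (s : seq 'I_n) (x : V) : V :=
  foldr (fun i y => refl (D i) y) x s.

(* s is a word of minimal length among all words w with w mu dominant;
   then weyl_act D s is the shortest element w_mu of W_0 with w_mu mu in P^+. *)
Definition shortest_dominating_word (Rs : seq V) (D : 'I_n -> V)
    (mu : V) (s : seq 'I_n) : Prop :=
  dominant Rs D (weyl_act D s mu) /\
  forall t : seq 'I_n, dominant Rs D (weyl_act D t mu) -> (size s <= size t)%N.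

End RootSystems.

(* Main.v *)
Require Import Defs.
From HB Require Import structures.
From mathcomp Require Import all_boot all_order all_algebra.
From mathcomp Require Import ring lra zify.
Set Implicit Arguments. Unset Strict Implicit. Unset Printing Implicit Defensive.
Import Order.TTheory GRing.Theory Num.Theory.
Local Open Scope ring_scope.

Section Aux.
Variables (R : realFieldType) (n : nat).
Notation V := 'rV[R]_n.
Implicit Types u v x y a b : V.

Lemma dotC u v : dot u v = dot v u.
Proof. by apply: eq_bigr => i _; rewrite mulrC. Qed.

Lemma dotDl u v x : dot (u + v) x = dot u x + dot v x.
Proof. rewrite /dot -big_split /=; apply: eq_bigr => i _; by rewrite mxE mulrDl. Qed.

Lemma dotZl c u v : dot (c *: u) v = c * dot u v.
Proof. rewrite /dot mulr_sumr; apply: eq_bigr => i _; by rewrite mxE mulrA. Qed.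

Lemma dotNl u v : dot (- u) v = - dot u v.
Proof. by rewrite -scaleN1r dotZl mulN1r. Qed.
Lemma dotBl u v x : dot (u - v) x = dot u x - dot v x.
Proof. by rewrite dotDl dotNl. Qed.
Lemma dotDr u v x : dot x (u + v) = dot x u + dot x v.
Proof. by rewrite dotC dotDl !(dotC x). Qed.
Lemma dotZr c u v : dot v (c *: u) = c * dot v u.
Proof. by rewrite dotC dotZl dotC. Qed.
Lemma dotNr u v : dot v (- u) = - dot v u.
Proof. by rewrite dotC dotNl dotC. Qed.
Lemma dotBr u v x : dot x (u - v) = dot x u - dot x v.
Proof. by rewrite dotDr dotNr. Qed.
Lemma dot0l v : dot 0 v = 0.
Proof. by rewrite -(scale0r 0) dotZl mul0r. Qed.
Lemma dot0r v : dot v 0 = 0.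
Proof. by rewrite dotC dot0l. Qed.

Lemma dot_suml (I : finType) (F : I -> V) v : dot (\sum_i F i) v = \sum_i dot (F i) v.
Proof. by apply: (big_morph (fun u => dot u v)) => [x y|]; rewrite ?dotDl ?dot0l. Qed.
Lemma dot_sumr (I : finType) (F : I -> V) v : dot v (\sum_i F i) = \sum_i dot v (F i).
Proof. rewrite dotC dot_suml; apply: eq_bigr => i _; exact: dotC. Qed.

Lemma dot_ge0 v : 0 <= dot v v.
Proof. apply: sumr_ge0 => i _; by rewrite -expr2 sqr_ge0. Qed.

Lemma dot_gt0 v : v != 0 -> 0 < dot v v.
Proof.
move=> nz; rewrite lt_def dot_ge0 andbT; apply: contra nz => /eqP H.
have H2 : forall k, v 0 k * v 0 k = 0.
  move=> k; apply: (psumr_eq0P (P := predT) (F := fun k => v 0 k * v 0 k)) => //.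
  by move=> i _; rewrite -expr2 sqr_ge0.
apply/eqP/matrixP => i j; rewrite (ord1 i) mxE.
by have /eqP := H2 j; rewrite mulf_eq0 orbb => /eqP.
Qed.

Lemma dot_neq0 v : v != 0 -> dot v v != 0.
Proof. by move=> /dot_gt0; rewrite lt0r => /andP[]. Qed.

Lemma pairingE x a : pairing x a = 2 * dot x a / dot a a.
Proof. by rewrite /pairing /coroot dotZr mulrAC. Qed.

Lemma pairingDl x y a : pairing (x + y) a = pairing x a + pairing y a.
Proof. by rewrite /pairing dotDl. Qed.
Lemma pairingZl c x a : pairing (c *: x) a = c * pairing x a.
Proof. by rewrite /pairing dotZl. Qed.
Lemma pairingNl x a : pairing (- x) a = - pairing x a.
Proof. by rewrite /pairing dotNl. Qed.
Lemma pairingNr x a : pairing x (- a) = - pairing x a.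
Proof. by rewrite !pairingE dotNr dotNl dotNr opprK mulrN mulNr. Qed.
Lemma pairing_aa a : a != 0 -> pairing a a = 2.
Proof. move=> /dot_neq0 H; rewrite pairingE; field; exact H. Qed.

Lemma dot_refl a x y : a != 0 -> dot (refl a x) (refl a y) = dot x y.
Proof.
move=> /dot_neq0 H; rewrite /refl !dotBl !dotBr !dotZl !dotZr !pairingE (dotC a y).
by field.
Qed.

Lemma refl_invol a x : a != 0 -> refl a (refl a x) = x.
Proof.
move=> H; rewrite {1}/refl {2}/refl pairingDl pairingNl pairingZl pairing_aa //.
have -> : pairing x a + - (pairing x a * 2) = - pairing x a by ring.
by rewrite scaleNr opprK subrK.
Qed.

Lemma reflD a x y : refl a (x + y) = refl a x + refl a y.
Proof. by rewrite /refl pairingDl scalerDl opprD addrACA. Qed.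
Lemma reflZ a c x : refl a (c *: x) = c *: refl a x.
Proof. by rewrite /refl pairingZl scalerBr scalerA. Qed.
Lemma reflN a x : refl a (- x) = - refl a x.
Proof. by rewrite -scaleN1r reflZ scaleN1r. Qed.
Lemma reflaa a : a != 0 -> refl a a = - a.
Proof. move=> H; rewrite /refl pairing_aa // scaler_nat mulr2n opprD addNKr. done. Qed.

Lemma corootN a : coroot (- a) = - coroot a.
Proof. by rewrite /coroot dotNl dotNr opprK scalerN. Qed.

Lemma dot_coroot a b : dot (coroot a) (coroot b) = 4 * dot a b / (dot a a * dot b b).
Proof.
rewrite /coroot dotZl dotZr.
have -> : (4 : R) = 2 * 2 by rewrite -natrM.
by rewrite invfM; ring.
Qed.

Lemma coroot_inj a b : a != 0 -> b != 0 -> coroot a = coroot b -> a = b.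
Proof.
move=> /dot_neq0 Ha /dot_neq0 Hb E.
have E2 : dot (coroot a) (coroot a) = dot (coroot b) (coroot b) by rewrite E.
rewrite !dot_coroot in E2.
have h1 : 4 * dot a a / (dot a a * dot a a) = 4 / dot a a by field.
have h2 : 4 * dot b b / (dot b b * dot b b) = 4 / dot b b by field.
rewrite h1 h2 in E2.
have Eab : dot a a = dot b b.
  apply: invr_inj; apply: (@mulfI _ 4); first by rewrite pnatr_eq0.
  exact: E2.
move: E; rewrite /coroot Eab => /(congr1 (fun v => (dot b b / 2) *: v)).
rewrite !scalerA.
have -> : dot b b / 2 * (2 / dot b b) = 1 by field.
by rewrite !scale1r.
Qed.

Lemma pairing_coroot x b : pairing x b = dot x (coroot b).
Proof. by []. Qed.

End Aux.

Section Roots.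
Variables (R : realFieldType) (n : nat).
Notation V := 'rV[R]_n.
Implicit Types u v x y a b : V.
Variables (Rs : seq V) (D : 'I_n -> V).
Hypothesis HR : irred_reduced_root_system Rs.
Hypothesis HB : is_base Rs D.

Lemma root_neq0 a : a \in Rs -> a != 0.
Proof. case: HR => H0 _ a_in; apply/eqP => E; by rewrite -E a_in in H0. Qed.
Lemma D_in i : D i \in Rs.
Proof. by case: HB. Qed.
Lemma D_neq0 i : D i != 0.
Proof. exact: root_neq0 (D_in i). Qed.
Lemma refl_in a b : a \in Rs -> b \in Rs -> refl a b \in Rs.
Proof. by case: HR => _ [_ [H _]]; apply: H. Qed.
Lemma opp_in a : a \in Rs -> - a \in Rs.
Proof. move=> Ha; rewrite -reflaa ?root_neq0 //; exact: refl_in. Qed.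
Lemma int_pair a b : a \in Rs -> b \in Rs -> is_int (pairing b a).
Proof. by case: HR => _ [_ [_ [H _]]]; apply: H. Qed.
Lemma reduced a b c : a \in Rs -> b \in Rs -> b = c *: a -> c = 1 \/ c = -1.
Proof. by case: HR => _ [_ [_ [_ [H _]]]]; apply: H. Qed.

Lemma weylD s x y : weyl_act D s (x + y) = weyl_act D s x + weyl_act D s y.
Proof. by elim: s => //= i s ->; rewrite reflD. Qed.
Lemma weylZ s c x : weyl_act D s (c *: x) = c *: weyl_act D s x.
Proof. by elim: s => //= i s ->; rewrite reflZ. Qed.
Lemma weylN s x : weyl_act D s (- x) = - weyl_act D s x.
Proof. by rewrite -scaleN1r weylZ scaleN1r. Qed.
Lemma weylB s x y : weyl_act D s (x - y) = weyl_act D s x - weyl_act D s y.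
Proof. by rewrite weylD weylN. Qed.
Lemma dot_weyl s x y : dot (weyl_act D s x) (weyl_act D s y) = dot x y.
Proof. by elim: s => //= i s <-; rewrite dot_refl ?D_neq0. Qed.
Lemma pairing_weyl s x a : pairing (weyl_act D s x) (weyl_act D s a) = pairing x a.
Proof. by rewrite !pairingE !dot_weyl. Qed.
Lemma weyl_refl s a x : weyl_act D s (refl a x) = refl (weyl_act D s a) (weyl_act D s x).
Proof. by rewrite /refl weylB weylZ pairing_weyl. Qed.
Lemma weyl_rev s x : weyl_act D s (weyl_act D (rev s) x) = x.
Proof.
elim: s x => //= i s IH x.
by rewrite rev_cons /weyl_act foldr_rcons -/(weyl_act D _ _) -/(weyl_act D _ _) IH refl_invol ?D_neq0.
Qed.
Lemma weyl_in s a : a \in Rs -> weyl_act D s a \in Rs.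
Proof. by elim: s => //= i s IH Ha; apply: refl_in (D_in i) (IH Ha). Qed.


Definition Dmx : 'M[R]_n := \matrix_(i < n) D i.

Lemma comb_mx (c : 'I_n -> R) : \sum_i c i *: D i = (\row_i c i) *m Dmx.
Proof. rewrite mulmx_sum_row; apply: eq_bigr => i _; by rewrite mxE rowK. Qed.

Lemma root_sub a : a \in Rs -> (a <= Dmx)%MS.
Proof.
case: HB => _ H /H [k [-> _]]; rewrite (comb_mx (fun i => (k i)%:~R)); exact: submxMl.
Qed.

Lemma Dmx_unit : Dmx \in unitmx.
Proof.
rewrite -row_full_unit -sub1mx; apply/row_subP => i.
case: HR => _ [Hspan _]; have [c ->] := Hspan (row i 1%:M).
apply: summx_sub => j _; apply: scalemx_sub; apply: root_sub; apply: mem_nth.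
exact: ltn_ord.
Qed.

Lemma indep (c : 'I_n -> R) : \sum_i c i *: D i = 0 -> forall i, c i = 0.
Proof.
rewrite comb_mx => /(congr1 (fun M => M *m invmx Dmx)); rewrite mulmxK ?Dmx_unit // mul0mx.
move=> E i; by have := congr1 (fun M : 'rV[R]_n => M 0 i) E; rewrite !mxE.
Qed.

Lemma coef_uniq (c d : 'I_n -> R) :
  \sum_i c i *: D i = \sum_i d i *: D i -> forall i, c i = d i.
Proof.
move=> E i; apply/eqP; rewrite -subr_eq0; apply/eqP; move: i; apply: indep.
rewrite (eq_bigr (fun i => c i *: D i - d i *: D i)); last by move=> i _; rewrite scalerBl.
by rewrite sumrB E subrr.
Qed.

Lemma sum_delta (j : 'I_n) (p : R) : \sum_l ((l == j)%:R * p) *: D l = p *: D j.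
Proof.
rewrite (bigD1 j) //= eqxx mul1r big1 ?addr0 // => l /negbTE ->.
by rewrite mul0r scale0r.
Qed.

Lemma coef_at (c : 'I_n -> R) j q : \sum_l c l *: D l = q *: D j -> c j = q.
Proof. by rewrite -sum_delta => /coef_uniq /(_ j); rewrite eqxx mul1r. Qed.

Definition cone v := exists c : 'I_n -> R, v = \sum_i c i *: D i /\ forall i, 0 <= c i.

Lemma cone_antisym v : cone v -> cone (- v) -> v = 0.
Proof.
move=> [c [Ec Hc]] [d [Ed Hd]].
have E : \sum_i c i *: D i = \sum_i (- d i) *: D i.
  rewrite -Ec (eq_bigr (fun i => - (d i *: D i))); last by move=> i _; rewrite scaleNr.
  by rewrite sumrN -Ed opprK.
have c0 i : c i = 0.
  have := coef_uniq E i; have := Hc i; have := Hd i; lra.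
by rewrite Ec big1 // => i _; rewrite c0 scale0r.
Qed.

Lemma pos_cone b : pos_root Rs D b -> cone b.
Proof.
move=> [_ [k [-> Hk]]]; exists (fun i => (k i)%:~R); split => // i; by rewrite ler0z.
Qed.

Lemma pos_simple i : pos_root Rs D (D i).
Proof.
split; first exact: D_in.
exists (fun l => (l == i)%:Z); split; last by move=> l; case: (l == i).
rewrite -{1}(scale1r (D i)) -sum_delta; apply: eq_bigr => l _.
by case: (l == i) => /=; rewrite ?mul1r ?mul0r.
Qed.

Lemma pos_neg_excl b : pos_root Rs D b -> neg_root Rs D b -> False.
Proof.
move=> Hp Hn; have E := cone_antisym (pos_cone Hp) (pos_cone Hn).
case: Hp => Hb _; by move: (root_neq0 Hb); rewrite E eqxx.
Qed.

Lemma pos_or_neg b : b \in Rs -> pos_root Rs D b \/ neg_root Rs D b.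
Proof.
move=> Hb; case: HB => _ /(_ b Hb) [k [Ek [Hk|Hk]]].
  by left; split => //; exists k.
right; split; first exact: opp_in.
exists (fun i => - k i); split; last by move=> i; rewrite oppr_ge0.
rewrite Ek -sumrN; apply: eq_bigr => i _; by rewrite intrN scaleNr.
Qed.

Lemma simple_refl_pos b i :
  pos_root Rs D b -> neg_root Rs D (refl (D i) b) -> b = D i.
Proof.
move=> Hp Hn; have [c [Ec Hc]] := pos_cone Hp; have [d [Ed Hd]] := pos_cone Hn.
have E : \sum_l (c l - (l == i)%:R * pairing b (D i) + d l) *: D l = 0.
  rewrite (eq_bigr (fun l => c l *: D l - ((l == i)%:R * pairing b (D i)) *: D l
     + d l *: D l)); last by move=> l _; rewrite !scalerDl scaleNr.
  by rewrite big_split /= sumrB sum_delta -Ec -Ed /refl subrr.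
have c0 l : l != i -> c l = 0.
  move=> /negbTE Hl; have := indep E l; rewrite Hl mul0r subr0 => h.
  have := Hc l; have := Hd l; lra.
have Eb : b = c i *: D i.
  rewrite Ec (bigD1 i) //= big1 ?addr0 // => l Hl; by rewrite c0 // scale0r.
case: Hp => Hb _.
case: (reduced (D_in i) Hb Eb) => Hci.
  by rewrite Eb Hci scale1r.
exfalso; have := Hc i; rewrite Hci; lra.
Qed.

Lemma deletion s b : pos_root Rs D b -> neg_root Rs D (weyl_act D s b) ->
  exists t : seq 'I_n, (size t < size s)%N /\
     forall x, weyl_act D t x = weyl_act D s (refl b x).
Proof.
elim: s => [|i s IH] Hp Hn.
  by case: (pos_neg_excl Hp Hn).
have Hin : weyl_act D s b \in Rs by apply: weyl_in; case: Hp.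
case: (pos_or_neg Hin) => H.
  have E := simple_refl_pos (i := i) H Hn.
  exists s; split => // x /=; by rewrite weyl_refl E refl_invol ?D_neq0.
have [t [Ht Et]] := IH Hp H.
exists (i :: t); split => /= [|x]; first by rewrite ltnS.
by rewrite Et.
Qed.

Lemma dot_pairing x a : a != 0 -> dot x a = pairing x a * dot a a / 2.
Proof. move=> /dot_neq0 H; rewrite pairingE; by field. Qed.

Lemma dom_dot x b : dominant Rs D x -> cone b -> 0 <= dot x b.
Proof.
move=> [_ Hx] [c [-> Hc]]; rewrite dot_sumr; apply: sumr_ge0 => i _; rewrite dotZr.
apply: mulr_ge0 => //; rewrite dot_pairing ?D_neq0 //.
by apply: mulr_ge0; [apply: mulr_ge0 => //; apply: dot_ge0 | rewrite invr_ge0].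
Qed.

Lemma is_intD (x y : R) : is_int x -> is_int y -> is_int (x + y).
Proof. by move=> [a ->] [b ->]; exists (a + b); rewrite intrD. Qed.
Lemma is_intN (x : R) : is_int x -> is_int (- x).
Proof. by move=> [a ->]; exists (- a); rewrite intrN. Qed.
Lemma int_ge1 (x : R) : is_int x -> 0 <= x -> x != 0 -> 1 <= x.
Proof. case=> z ->; rewrite ler0z intr_eq0 ler1z; lia. Qed.
Lemma int_ge2 (x : R) : is_int x -> 1 < x -> 2 <= x.
Proof. case=> z ->; rewrite -[2 : R]/((2%:Z)%:~R) ltr1z ler_int; lia. Qed.
Lemma int_eq1 (x : R) : is_int x -> 1 <= x -> x < 2 -> x = 1.
Proof.
case=> z ->; rewrite -[2 : R]/((2%:Z)%:~R) ler1z ltr_int => h1 h2.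
have -> : z = 1 by lia.
done.
Qed.


Variable a0 : V.
Hypothesis HA0 : is_alpha0 Rs D a0.

Lemma a0_in : a0 \in Rs.
Proof. by case: HA0 => [[]]. Qed.
Lemma a0_neq0 : a0 != 0.
Proof. exact: root_neq0 a0_in. Qed.

Lemma coroot_comb (k : 'I_n -> int) : \sum_i (k i)%:~R *: coroot (D i)
   = \sum_i ((k i)%:~R * (2 / dot (D i) (D i))) *: D i.
Proof. apply: eq_bigr => i _; by rewrite /coroot scalerA. Qed.

Lemma highest_cone b : b \in Rs -> cone (coroot a0 - coroot b).
Proof.
case: HA0 => _ H /H [k [-> Hk]]; rewrite coroot_comb; eexists; split; first reflexivity.
move=> i; apply: mulr_ge0; first by rewrite ler0z.
apply: divr_ge0 => //; exact: dot_ge0.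
Qed.

Lemma a0_dom j : 0 <= dot a0 (D j).
Proof.
rewrite leNgt; apply/negP => Hneg.
have Hb : refl (D j) a0 \in Rs by apply: refl_in (D_in j) a0_in.
have [c [Ec Hc]] := highest_cone Hb.
have Edd : dot (refl (D j) a0) (refl (D j) a0) = dot a0 a0 by rewrite dot_refl ?D_neq0.
have E : coroot a0 - coroot (refl (D j) a0) = (2 / dot a0 a0 * pairing a0 (D j)) *: D j.
  rewrite /coroot Edd /refl; apply/rowP => i; rewrite !mxE; ring.
rewrite E in Ec.
have Hcj := coef_at (esym Ec).
have := Hc j; rewrite Hcj pairingE.
have hA := dot_gt0 a0_neq0; have hB := dot_gt0 (D_neq0 j).
have hpos : 0 < 2 / dot a0 a0 * (2 * (- dot a0 (D j)) / dot (D j) (D j)).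
  apply: mulr_gt0; first exact: divr_gt0.
  apply: divr_gt0 => //; apply: mulr_gt0 => //; by rewrite oppr_gt0.
have -> : 2 / dot a0 a0 * (2 * dot a0 (D j) / dot (D j) (D j)) =
   - (2 / dot a0 a0 * (2 * (- dot a0 (D j)) / dot (D j) (D j))) by ring.
lra.
Qed.

Lemma a0_cone v : cone v -> 0 <= dot a0 v.
Proof.
move=> [c [-> Hc]]; rewrite dot_sumr; apply: sumr_ge0 => i _; rewrite dotZr.
exact: mulr_ge0 (Hc i) (a0_dom i).
Qed.

Lemma pairing_a0_pos b : pos_root Rs D b -> 0 <= pairing a0 b.
Proof.
move=> Hp; rewrite pairingE; apply: mulr_ge0; last by rewrite invr_ge0 dot_ge0.
by apply: mulr_ge0 => //; apply: a0_cone; apply: pos_cone.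
Qed.

Lemma a0_max b : b \in Rs -> 2 <= pairing a0 b -> b = a0.
Proof.
move=> Hb Hp.
have hA := dot_gt0 a0_neq0; have hB := dot_gt0 (root_neq0 Hb).
have hA' := dot_neq0 a0_neq0; have hB' := dot_neq0 (root_neq0 Hb).
have C1 := highest_cone Hb.
have h1 : 0 <= dot a0 (coroot a0 - coroot b) := a0_cone C1.
have h1' : dot a0 (coroot a0 - coroot b) = 2 - pairing a0 b.
  rewrite dotBr /coroot !dotZr pairingE; field; by rewrite ?hA' ?hB'.
have p2 : pairing a0 b = 2 by lra.
have Eab : dot a0 b = dot b b.
  move: p2; rewrite pairingE => h.
  have -> : dot a0 b = (2 * dot a0 b / dot b b) * dot b b / 2 by field; rewrite ?hA' ?hB'.
  rewrite h; field; by rewrite ?hA' ?hB'.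
have Hb2 : - refl a0 b \in Rs by apply: opp_in; apply: refl_in a0_in Hb.
have C2 := highest_cone Hb2.
have Er : dot (refl a0 b) (refl a0 b) = dot b b by rewrite dot_refl ?a0_neq0.
have E2 : coroot a0 - coroot (- refl a0 b) = - (coroot a0 - coroot b).
  rewrite corootN /coroot Er /refl pairingE (dotC b a0) Eab.
  apply/rowP => i; rewrite !mxE; field; by rewrite ?hA' ?hB'.
rewrite E2 in C2.
have Z := cone_antisym C1 C2.
apply: coroot_inj (root_neq0 Hb) a0_neq0 _.
by apply/esym/eqP; rewrite -subr_eq0; apply/eqP.
Qed.

Variables (mu : V) (s : seq 'I_n).
Hypothesis Hs : shortest_dominating_word Rs D mu s.

Lemma lam_dom : dominant Rs D (weyl_act D s mu).
Proof. by case: Hs. Qed.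
Lemma lam_int a : a \in Rs -> is_int (pairing (weyl_act D s mu) a).
Proof. by case: lam_dom => H _; apply: H. Qed.

Lemma claimC b : pos_root Rs D b -> neg_root Rs D (weyl_act D s b) ->
  pairing (weyl_act D s mu) (weyl_act D s b) != 0.
Proof.
move=> Hp Hn; apply/eqP => E.
have [t [Ht Et]] := deletion Hp Hn.
case: Hs => Hdom /(_ t) H.
have : dominant Rs D (weyl_act D t mu) by rewrite Et weyl_refl {1}/refl E scale0r subr0.
by move/H; rewrite leqNgt Ht.
Qed.

Lemma simple_pre i : exists b, b \in Rs /\ weyl_act D s b = D i.
Proof.
exists (weyl_act D (rev s) (D i)); split; first by apply: weyl_in; exact: D_in.
exact: weyl_rev.
Qed.

Lemma claim_simple i b : b \in Rs -> weyl_act D s b = D i -> neg_root Rs D b ->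
  1 <= pairing (weyl_act D s mu) (D i).
Proof.
move=> Hb Eb Hn.
have Hn' : neg_root Rs D (weyl_act D s (- b)).
  by rewrite weylN Eb /neg_root opprK; exact: pos_simple.
have := claimC Hn Hn'; rewrite weylN Eb pairingNr oppr_eq0 => H.
apply: int_ge1 => //; first exact: lam_int (D_in i).
by case: lam_dom => _ ->.
Qed.

Lemma part1 om : minuscule Rs D om -> dominant Rs D (weyl_act D s mu + weyl_act D s om).
Proof.
move=> [[Hwom _] [_ Hmin]]; split.
  move=> a Ha; rewrite pairingDl; apply: is_intD; first exact: lam_int.
  rewrite -(weyl_rev s a) pairing_weyl; apply: Hwom; apply: weyl_in Ha.
move=> i; have [b [Hb Eb]] := simple_pre i.
have Ep : pairing (weyl_act D s om) (D i) = pairing om b by rewrite -Eb pairing_weyl.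
rewrite pairingDl Ep.
have h0 := (lam_dom).2 i.
case: (pos_or_neg Hb) => Hpn.
  by case: (Hmin b Hpn) => ->; lra.
have h1 := claim_simple Hb Eb Hpn.
by case: (Hmin (- b) Hpn); rewrite pairingNr => h; lra.
Qed.

Lemma part2a : ~ dominant Rs D (weyl_act D s mu + weyl_act D s a0) ->
  exists j, weyl_act D s a0 = - D j /\ pairing (weyl_act D s mu) (D j) = 1.
Proof.
move=> Hnd.
have Hwt : weight Rs (weyl_act D s mu + weyl_act D s a0).
  move=> a Ha; rewrite pairingDl; apply: is_intD; first exact: lam_int.
  exact: int_pair Ha (weyl_in _ a0_in).
have : ~~ [forall i, 0 <= pairing (weyl_act D s mu + weyl_act D s a0) (D i)].
  apply/negP => /forallP H; apply: Hnd; split => //.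
rewrite negb_forall => /existsP [i]; rewrite -ltNge => Hi.
have [b [Hb Eb]] := simple_pre i.
have Ep : pairing (weyl_act D s a0) (D i) = pairing a0 b by rewrite -Eb pairing_weyl.
move: Hi; rewrite pairingDl Ep => Hi.
have h0 := (lam_dom).2 i.
case: (pos_or_neg Hb) => Hpn.
  by exfalso; have := pairing_a0_pos Hpn; lra.
have h1 := claim_simple Hb Eb Hpn.
have Hp2 : 2 <= pairing a0 (- b).
  apply: int_ge2; first exact: int_pair (opp_in Hb) a0_in.
  rewrite pairingNr; lra.
have E := a0_max (opp_in Hb) Hp2.
exists i; split.
  by rewrite -E weylN Eb.
have Em2 : pairing a0 b = -2 by rewrite -(opprK b) pairingNr E pairing_aa ?a0_neq0.
apply: int_eq1 => //; first exact: lam_int (D_in i).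
lra.
Qed.

Lemma part2b : dominant Rs D (weyl_act D s mu + weyl_act D s a0) ->
  neg_root Rs D (weyl_act D s a0) -> pairing (weyl_act D s mu) (weyl_act D s a0) <= -2.
Proof.
move=> Hd Hn.
have := dom_dot Hd (pos_cone Hn).
have hg : weyl_act D s a0 != 0 := root_neq0 (weyl_in s a0_in).
have hG := dot_gt0 hg.
rewrite dotNr dotDl pairingE => h.
rewrite ler_pdivrMr //.
lra.
Qed.

End Roots.

Theorem mainTheorem20 (R : realFieldType) (n : nat) (Rs : seq 'rV[R]_n)
    (D : 'I_n -> 'rV[R]_n) (a0 mu : 'rV[R]_n) (s : seq 'I_n) :
  irred_reduced_root_system Rs ->
  is_base Rs D ->
  is_alpha0 Rs D a0 ->
  weight Rs mu ->
  shortest_dominating_word Rs D mu s ->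
  let w := weyl_act D s in
  let mup := w mu in
  (* (i) *)
  (forall om, minuscule Rs D om -> dominant Rs D (mup + w om)) /\
  (* (iia) *)
  (~ dominant Rs D (mup + w a0) ->
     exists j : 'I_n, w a0 = - D j /\ pairing mup (D j) = 1) /\
  (* (iib) *)
  (dominant Rs D (mup + w a0) -> neg_root Rs D (w a0) ->
     pairing mup (w a0) <= -2).
Proof.
move=> HR HB HA0 _ Hs w mup; split; last split.
- move=> om Hom; eapply part1; eassumption.
- move=> H; eapply part2a; eassumption.
- move=> H1 H2; eapply part2b; eassumption.
Qed.
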